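(* Let $U^{(n)}$ be uniformly distributed on $\{1,\dots,n\}$ and, for $1\le m<n$, put $\widetilde U^{(n,m)}:=\prod_{m<p\le n,\ p\ \text{prime}}p^{\mathbbm{1}_{\{\lambda_p(U^{(n)})\ge1\}}}$. Assume that $m_n>n^{1/2}$ for all sufficiently large $n$ and $m_n=o(n)$ as $n\to\infty$. Then $${\rm Var}\bigl(\log\widetilde U^{(n,m_n)}\bigr)\sim 2^{-1}(\log n-\log m_n)(3\log m_n-\log n),\qquad n\to\infty.$$
   Context: For a prime $p$ and $k\in\mathbb{N}$, $\lambda_p(k)$ is the exponent of $p$ in the prime factorization of $k$. $a_n\sim b_n$ means $a_n/b_n\to1$. *)

(* Defs.v *)
From Stdlib Require Import Reals Arith List ZArith Znumtheory.
From Coquelicot Require Import Coquelicot.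
Open Scope R_scope.

Definition primeb (p : nat) : bool :=
  if prime_dec (Z.of_nat p) then true else false.

(* p divides k (p >= 1 here, since p > m >= 0 ranges over primes) *)
Definition dvdb (p k : nat) : bool := Nat.eqb (Nat.modulo k p) 0.

(* log Ũ^{(n,m)} evaluated at the outcome U^{(n)} = k:
   sum over primes m < p <= n with lambda_p(k) >= 1 of log p. *)
Definition logUtilde (n m k : nat) : R :=
  fold_right Rplus 0
    (map (fun p => if andb (primeb p) (dvdb p k) then ln (INR p) else 0)
         (seq (S m) (n - m))).

Definition mean_logUtilde (n m : nat) : R :=
  fold_right Rplus 0 (map (logUtilde n m) (seq 1 n)) / INR n.

Definition var_logUtilde (n m : nat) : R :=
  fold_right Rplus 0
    (map (fun k => (logUtilde n m k - mean_logUtilde n m) ^ 2) (seq 1 n)) / INR n.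

(* Main.v *)
From HB Require Import structures.
Require Import Defs.
From Stdlib Require Import Reals Arith List ZArith Znumtheory Lra Lia.
From Coquelicot Require Import Coquelicot.
From mathcomp Require Import all_boot zify.
Open Scope R_scope.

Lemma Rplus_assoc' : associative Rplus. Proof. intros ???; ring. Qed.
Lemma Rmult_assoc' : associative Rmult. Proof. intros ???; ring. Qed.
HB.instance Definition _ := Monoid.isComLaw.Build R 0 Rplus Rplus_assoc' Rplus_comm Rplus_0_l.
HB.instance Definition _ := Monoid.isComLaw.Build R 1 Rmult Rmult_assoc' Rmult_comm Rmult_1_l.
HB.instance Definition _ := Monoid.isMulLaw.Build R 0 Rmult Rmult_0_l Rmult_0_r.
HB.instance Definition _ := Monoid.isAddLaw.Build R Rmult Rplus Rmult_plus_distr_r Rmult_plus_distr_l.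

Lemma sum_fold (f : nat -> R) a len :
  fold_right Rplus 0 (List.map f (List.seq a len)) = \big[Rplus/0]_(a <= i < a + len) f i.
Proof.
elim: len a => [|len IH] a /=; first by rewrite addn0 big_geq.
rewrite IH [in RHS]big_ltn; last by rewrite addnS ltnS leq_addr.
by rewrite addSn addnS.
Qed.

Lemma ltINR (a b : nat) : (a < b)%nat -> INR a < INR b.
Proof. by move/ltP; apply: lt_INR. Qed.
Lemma leINR (a b : nat) : (a <= b)%nat -> INR a <= INR b.
Proof. by move/leP; apply: le_INR. Qed.
Lemma INR_gt0 (a : nat) : (0 < a)%nat -> 0 < INR a.
Proof. by move/ltINR. Qed.

Lemma big_le (r : seq nat) (P : pred nat) (F G : nat -> R) :
  (forall i, P i -> F i <= G i) ->
  \big[Rplus/0]_(i <- r | P i) F i <= \big[Rplus/0]_(i <- r | P i) G i.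
Proof.
move=> H; apply: (big_ind2 (fun x y => x <= y)) => //; first lra.
move=> *; lra.
Qed.

Lemma big_ge0 (r : seq nat) (P : pred nat) (F : nat -> R) :
  (forall i, P i -> 0 <= F i) -> 0 <= \big[Rplus/0]_(i <- r | P i) F i.
Proof.
move=> H; apply: (big_ind (fun x => 0 <= x)) => //; first lra.
move=> *; lra.
Qed.

Lemma INR_big (r : seq nat) (P : pred nat) (F : nat -> nat) :
  INR (\sum_(i <- r | P i) F i) = \big[Rplus/0]_(i <- r | P i) INR (F i).
Proof.
elim: r => [|x r IH]; first by rewrite !big_nil.
rewrite !big_cons; case: (P x) => //; by rewrite plus_INR IH.
Qed.

Lemma ln_prod (r : seq nat) (P : pred nat) (F : nat -> nat) :
  (forall i, P i -> 0 < F i)%nat ->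
  ln (INR (\prod_(i <- r | P i) F i)) = \big[Rplus/0]_(i <- r | P i) ln (INR (F i)).
Proof.
move=> H; elim: r => [|x r IH]; first by rewrite !big_nil /= ln_1.
rewrite !big_cons; case Px: (P x); last exact IH.
rewrite mult_INR ln_mult ?IH //; first (apply/INR_gt0; exact: H).
apply/INR_gt0; apply: prodn_cond_gt0 => i; exact: H.
Qed.

Lemma INR_expn (p e : nat) : INR (p ^ e) = INR p ^ e.
Proof. elim: e => [|e IH] //=; by rewrite expnS mult_INR IH. Qed.

Lemma ln_pow_nat (p e : nat) : (0 < p ^ e)%nat -> ln (INR (p ^ e)) = INR e * ln (INR p).
Proof.
case: e => [|e] H; first by rewrite /= ln_1; ring.
rewrite INR_expn ln_pow //; apply INR_gt0.
by move: H; rewrite expn_gt0 orbF.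
Qed.

Lemma ln_decomp (N B : nat) : (0 < N)%nat -> (N <= B)%nat ->
  ln (INR N) = \big[Rplus/0]_(0 <= p < B.+1) (INR (logn p N) * ln (INR p)).
Proof.
move=> N0 NB.
have E := widen_partn predT NB; rewrite partnT // in E.
rewrite {1}E ln_prod; last by move=> i _; apply: pfactor_gt0.
rewrite big_mkcond /=; apply: eq_bigr => i _.
by rewrite ln_pow_nat.
Qed.

Lemma primeb_prime p : primeb p = prime p.
Proof.
rewrite /primeb; case: prime_dec => H; apply/esym.
- apply/primeP; split.
  + have := prime_ge_2 _ H; lia.
  + move=> d /dvdnP [k Hk].
    have Hd : (Z.of_nat d | Z.of_nat p)%Z.
      by exists (Z.of_nat k); rewrite Hk Nat2Z.inj_mul.
    have: (0 <= Z.of_nat d)%Z by lia.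
    have [] := prime_divisors _ H _ Hd; lia.
- apply/negP => /primeP [H1 H2]; apply: H; apply/prime_alt; split; first lia.
  move=> n Hn [k Hk].
  have Hk0 : (0 <= k)%Z by nia.
  have Hd : (Z.to_nat n %| p)%nat by (apply/dvdnP; exists (Z.to_nat k); lia).
  have := H2 _ Hd; case/orP => /eqP; lia.
Qed.

Lemma big_le_nat (m n : nat) (F G : nat -> R) :
  (forall i, (m <= i < n)%nat -> F i <= G i) ->
  \big[Rplus/0]_(m <= i < n) F i <= \big[Rplus/0]_(m <= i < n) G i.
Proof.
move=> H; rewrite big_nat_cond [X in _ <= X]big_nat_cond.
apply: big_le => i /andP [hi _]; exact: H.
Qed.

Lemma big_ge0_nat (m n : nat) (F : nat -> R) :
  (forall i, (m <= i < n)%nat -> 0 <= F i) ->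
  0 <= \big[Rplus/0]_(m <= i < n) F i.
Proof.
move=> H; rewrite big_nat_cond.
apply: big_ge0 => i /andP [hi _]; exact: H.
Qed.

Lemma big_nat_recrR (m n : nat) (F : nat -> R) : (m <= n)%nat ->
  \big[Rplus/0]_(m <= i < n.+1) F i = \big[Rplus/0]_(m <= i < n) F i + F n.
Proof. move=> h; by rewrite big_nat_recr. Qed.

Lemma big_cat_natR (m n p : nat) (F : nat -> R) : (m <= n)%nat -> (n <= p)%nat ->
  \big[Rplus/0]_(m <= i < p) F i = \big[Rplus/0]_(m <= i < n) F i + \big[Rplus/0]_(n <= i < p) F i.
Proof. move=> h1 h2; by rewrite (big_cat_nat h1 h2). Qed.

Lemma dvdb_dvdn p k : (0 < p)%nat -> dvdb p k = (p %| k).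
Proof.
move=> p0; rewrite /dvdb /dvdn.
have -> : Nat.modulo k p = k %% p.
  have := divn_eq k p; have := ltn_pmod k p0.
  move=> h1 h2.
  symmetry; apply: (Nat.mod_unique k p (k %/ p)); lia.
by case: (Nat.eqb_spec (k %% p) 0) => [->|/eqP/negbTE ->].
Qed.

Lemma bin_le_pow k a : ('C(k, a) <= 2 ^ k)%nat.
Proof.
elim: k a => [|k IH] [|a] //=.
- by rewrite bin0 expn_gt0.
- rewrite binS expnS mul2n -addnn; apply: leq_add; exact: IH.
Qed.

Lemma prime_dvd_fact_le p n : prime p -> p %| n`! -> (p <= n)%nat.
Proof.
move=> pp; elim: n => [|n IH].
  by rewrite fact0 dvdn1 => /eqP p1; move: pp; rewrite p1.
rewrite factS Euclid_dvdM // => /orP [/dvdn_leq -> //|/IH]; lia.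
Qed.

Lemma prime_dvd_bin p k a : prime p -> (a <= k)%nat -> (a < p)%nat -> (k - a < p)%nat ->
  (p <= k)%nat -> p %| 'C(k, a).
Proof.
move=> pp ak ap kap pk.
have: p %| 'C(k, a) * (a`! * (k - a)`!).
  rewrite bin_fact //; apply: dvdn_fact; rewrite pk andbT; exact: prime_gt0.
rewrite !Euclid_dvdM // => /orP [//|/orP [/(prime_dvd_fact_le _ _ pp)|/(prime_dvd_fact_le _ _ pp)]]; lia.
Qed.

Lemma logn_term_ge0 p N : 0 <= INR (logn p N) * ln (INR p).
Proof.
case: p => [|p].
  by rewrite /logn /=; lra.
apply: Rmult_le_pos; first exact: pos_INR.
rewrite -ln_1; apply: ln_le; first lra.
have := leINR 1 p.+1; simpl; lia || (move=> h; apply: h; done).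
Qed.

Definition th (n : nat) : R :=
  \big[Rplus/0]_(0 <= p < n.+1) (if prime p then ln (INR p) else 0).

Lemma th_diff k a : (a <= k)%nat ->
  \big[Rplus/0]_((maxn a (k - a)).+1 <= p < k.+1) (if prime p then ln (INR p) else 0)
  <= INR k * ln 2.
Proof.
move=> ak; set B := maxn a (k - a).
set C := 'C(k, a).
have C0 : (0 < C)%nat by rewrite bin_gt0.
have lnC : ln (INR C) <= INR k * ln 2.
  rewrite -ln_pow; last lra.
  apply: ln_le; first exact: INR_gt0 C0.
  have h := leINR _ _ (bin_le_pow k a); rewrite INR_expn in h.
  have e2 : INR 2 = 2 by simpl; lra.
  by rewrite e2 in h.
apply: Rle_trans lnC.
rewrite (ln_decomp C (maxn C k) C0 (leq_maxl _ _)).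
have h2 : (B.+1 <= k.+1)%nat by rewrite ltnS /B geq_max ak leq_subr.
have h3 : (k.+1 <= (maxn C k).+1)%nat by rewrite ltnS leq_maxr.
rewrite [X in _ <= X](big_cat_nat _ (n:=B.+1)) //=; last by apply: leq_trans h2 h3.
rewrite [X in _ <= _ + X](big_cat_nat _ (n:=k.+1)) //=.
have t1 := big_ge0_nat 0 B.+1 _ (fun i _ => logn_term_ge0 i C).
have t3 := big_ge0_nat k.+1 (maxn C k).+1 _ (fun i _ => logn_term_ge0 i C).
suff : \big[Rplus/0]_(B.+1 <= p < k.+1) (if prime p then ln (INR p) else 0) <=
  \big[Rplus/0]_(B.+1 <= p < k.+1) (INR (logn p C) * ln (INR p)) by lra.
apply: big_le_nat => p /andP [Bp pk].
case pp: (prime p); last exact: logn_term_ge0.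
have lnp : 0 <= ln (INR p).
  rewrite -ln_1; apply: ln_le; first lra.
  have := leINR 1 p (prime_gt0 pp); simpl; lra.
have : (1 <= logn p C)%nat.
  rewrite logn_gt0 mem_primes pp C0 /=; apply: prime_dvd_bin => //.
  - move: Bp; rewrite /B; lia.
  - move: Bp; rewrite /B; lia.
move/leINR => /= h; nra.
Qed.

Lemma ln2_pos : 0 < ln 2.
Proof. have := ln_lt_2; lra. Qed.

Lemma th_small k : (k <= 1)%nat -> th k = 0.
Proof.
case: k => [|[|k]] // _; rewrite /th.
- by rewrite big_nat1.
- by rewrite big_nat_recr //= big_nat1 /=; ring.
Qed.

Lemma cheb k : th k <= 4 * ln 2 * INR k.
Proof.
elim/ltn_ind: k => k IH.
have l2 := ln2_pos.
case: (leqP k 1) => k1.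
  rewrite th_small //; have := pos_INR k; nra.
set a := k %/ 2.
have ak : (a <= k)%nat by rewrite /a leq_div.
have eB : maxn a (k - a) = (k - a)%nat by apply/maxn_idPr; rewrite /a; lia.
have hd := th_diff k a ak; rewrite eB in hd.
have Bk : (k - a < k)%nat by rewrite /a; lia.
have IHB := IH _ Bk.
have -> : th k = th (k - a) + \big[Rplus/0]_((k - a).+1 <= p < k.+1) (if prime p then ln (INR p) else 0).
  by rewrite /th -big_cat_nat //; apply: leqW; lia.
have h4 : (4 * (k - a) <= 3 * k)%nat by rewrite /a; lia.
have := leINR _ _ h4; rewrite !mult_INR /=.
move=> h; nra.
Qed.

Lemma ln_inc x : 0 < x -> 0 <= ln (x + 1) - ln x <= / x.
Proof.
move=> x0.
have e : ln (x + 1) = ln x + ln (1 + / x).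
  rewrite -ln_mult; try (have := Rinv_0_lt_compat x x0; lra).
  f_equal; field; lra.
have h1 : ln (1 + / x) <= / x.
  rewrite -{2}(ln_exp (/ x)); apply: ln_le; first (have := Rinv_0_lt_compat x x0; lra).
  exact: exp_ineq1_le.
have h2 : 0 <= ln (1 + / x).
  rewrite -ln_1; apply: ln_le; first lra.
  have := Rinv_0_lt_compat x x0; lra.
lra.
Qed.

Lemma ln_INR_ge0 n : 0 <= ln (INR n) \/ n = 0%nat.
Proof.
case: n => [|n]; [by right|left].
rewrite -ln_1; apply: ln_le; first lra.
rewrite S_INR; have := pos_INR n; lra.
Qed.

Lemma ln_prime_ge0 p : prime p -> 0 <= ln (INR p).
Proof.
move=> pp; case: (ln_INR_ge0 p) => // p0; by rewrite p0 in pp.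
Qed.

Lemma big0_nat (m n : nat) (F : nat -> R) :
  (forall i, (m <= i < n)%nat -> F i = 0) -> \big[Rplus/0]_(m <= i < n) F i = 0.
Proof.
move=> H; rewrite big_nat_cond; apply: big1 => i /andP [hi _]; exact: H.
Qed.

Lemma lnfact_bounds n :
  INR n * ln (INR n) - INR n <= ln (INR n`!) <= INR n * ln (INR n).
Proof.
elim: n => [|n [IH1 IH2]]; first by rewrite /= ln_1; lra.
rewrite factS mult_INR ln_mult; [|exact: INR_gt0|exact: INR_gt0 (fact_gt0 n)].
case: n IH1 IH2 => [|n] IH1 IH2.
  rewrite /= !Rmult_1_l ln_1; lra.
rewrite [INR n.+2]S_INR.
have x0 : 0 < INR n.+1 by apply: INR_gt0.
have [d1 d2] := ln_inc _ x0.
have hx : INR n.+1 * (ln (INR n.+1 + 1) - ln (INR n.+1)) <= 1.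
  apply: (Rle_trans _ (INR n.+1 * / INR n.+1)); last by right; field; lra.
  apply: Rmult_le_compat_l; lra.
have := Rmult_le_pos _ _ (pos_INR n.+1) d1.
have hl : 0 <= ln (INR n.+1) by case: (ln_INR_ge0 n.+1).
nra.
Qed.

Lemma div_le_INR n d : (0 < d)%nat -> INR (n %/ d) * INR d <= INR n.
Proof.
move=> d0; rewrite -mult_INR; apply: leINR.
have := divn_eq n d; lia.
Qed.

Lemma div_gt_INR n d : (0 < d)%nat -> INR n < (INR (n %/ d) + 1) * INR d.
Proof.
move=> d0; rewrite -S_INR -mult_INR; apply: ltINR.
have := ltn_pmod n d0; have := divn_eq n d; lia.
Qed.

Lemma geom r J : (1 - r) * \big[Rplus/0]_(1 <= j < J.+1) r ^ j = r - r ^ J.+1.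
Proof.
elim: J => [|J IH]; first by rewrite big_geq //=; ring.
rewrite big_nat_recr //= Rmult_plus_distr_l IH /=; ring.
Qed.

Lemma logn_fact_upper p n : prime p -> INR (logn p n`!) <= INR n / (INR p - 1).
Proof.
move=> pp; rewrite logn_fact // INR_big.
have p1 : 1 < INR p by have := ltINR 1 p (prime_gt1 pp); simpl.
set r := / INR p.
have r0 : 0 < r by apply: Rinv_0_lt_compat; lra.
have r1 : r < 1 by rewrite /r -Rinv_1; apply: Rinv_lt_contravar; lra.
apply: (Rle_trans _ (\big[Rplus/0]_(1 <= j < n.+1) (INR n * r ^ j))).
  apply: big_le_nat => j _.
  have pj : (0 < p ^ j)%nat by rewrite expn_gt0 prime_gt0.
  have := div_le_INR n _ pj; rewrite INR_expn => h.
  have pj' : 0 < INR p ^ j by apply: pow_lt; lra.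
  rewrite /r pow_inv.
  apply: (Rmult_le_reg_r (INR p ^ j)) => //.
  rewrite Rmult_assoc Rinv_l; lra.
rewrite -big_distrr /=.
have g := geom r n.
have hs : \big[Rplus/0]_(1 <= j < n.+1) r ^ j <= r / (1 - r).
  apply: (Rmult_le_reg_l (1 - r)); first lra.
  rewrite g; have := pow_lt r n.+1 r0.
  have -> : (1 - r) * (r / (1 - r)) = r by field; lra.
  lra.
have -> : INR n / (INR p - 1) = INR n * (r / (1 - r)).
  rewrite /r; field; lra.
apply: Rmult_le_compat_l => //; exact: pos_INR.
Qed.

Lemma logn_fact_lower p n : prime p -> (n %/ p <= logn p n`!)%nat.
Proof.
move=> pp; rewrite logn_fact //.
case: n => [|n]; first by rewrite div0n.
by rewrite big_ltn // expn1 leq_addr.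
Qed.

Lemma logn_fact_big p n : (n < p)%nat -> logn p n`! = 0%nat.
Proof.
move=> np; case pp: (prime p); last by rewrite /logn pp.
rewrite logn_fact //; apply: big1_seq => j /andP [_]; rewrite mem_index_iota => /andP [j1 _].
apply: divn_small; apply: (leq_trans np).
by rewrite -{1}(expn1 p) leq_pexp2l // prime_gt0.
Qed.

Lemma lnfact_decomp n :
  ln (INR n`!) = \big[Rplus/0]_(0 <= p < n.+1) (INR (logn p n`!) * ln (INR p)).
Proof.
rewrite (ln_decomp _ _ (fact_gt0 n) (leqnn _)).
rewrite (big_cat_nat _ (n:=n.+1)) //=; last by rewrite ltnS fact_geq.
rewrite [X in _ + X]big0_nat ?Rplus_0_r // => i /andP [ni _].
by rewrite logn_fact_big //= Rmult_0_l.
Qed.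

Lemma bigR_sub (r : seq nat) (P : pred nat) (F G : nat -> R) :
  \big[Rplus/0]_(i <- r | P i) (F i - G i) =
  \big[Rplus/0]_(i <- r | P i) F i - \big[Rplus/0]_(i <- r | P i) G i.
Proof.
elim: r => [|x r IH]; first by rewrite !big_nil; ring.
rewrite !big_cons; case: (P x); rewrite IH; ring.
Qed.

Definition Af n := \big[Rplus/0]_(0 <= p < n.+1) (if prime p then ln (INR p) / INR p else 0).
Definition gf p := if prime p then ln (INR p) / (INR p * (INR p - 1)) else 0.

Lemma gsum n : (1 <= n)%nat ->
  \big[Rplus/0]_(0 <= p < n.+1) gf p + ln (INR n) / INR n + 2 / INR n <= 2.
Proof.
elim: n => [//|n IH] _.
case: n IH => [|n] IH.
  rewrite big_nat_recr //= big_nat1 /gf /= ln_1; lra.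
have {}IH := IH isT.
rewrite big_nat_recrR //.
set x := INR n.+1.
have x1 : 1 <= x by rewrite /x S_INR; have := pos_INR n; lra.
have ex : INR n.+2 = x + 1 by rewrite /x [INR n.+2]S_INR.
have [d1 d2] := ln_inc x ltac:(lra).
have lx : 0 <= ln x by rewrite /x; case: (ln_INR_ge0 n.+1).
have hg : gf n.+2 <= ln (x + 1) / ((x + 1) * x).
  rewrite /gf ex; case: (prime _).
    rewrite (_ : x + 1 - 1 = x); [lra | ring].
  apply: Rmult_le_pos; first lra.
  apply: Rlt_le; apply: Rinv_0_lt_compat; nra.
rewrite ex; rewrite -/x in IH.
suff : ln (x + 1) / ((x + 1) * x) + ln (x + 1) / (x + 1) + 2 / (x + 1)
       <= ln x / x + 2 / x by lra.
have e : ln x / x + 2 / x - (ln (x + 1) / ((x + 1) * x) + ln (x + 1) / (x + 1) + 2 / (x + 1))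
   = (2 - (x + 1) * (ln (x + 1) - ln x)) / (x * (x + 1)) by field; lra.
suff : 0 <= (2 - (x + 1) * (ln (x + 1) - ln x)) / (x * (x + 1)) by lra.
apply: Rmult_le_pos; last (apply: Rlt_le; apply: Rinv_0_lt_compat; nra).
have : (x + 1) * (ln (x + 1) - ln x) <= (x + 1) * / x by apply: Rmult_le_compat_l; lra.
have : (x + 1) * / x <= 2.
  apply: (Rmult_le_reg_r x); first lra.
  rewrite Rmult_assoc Rinv_l; lra.
lra.
Qed.

Lemma gsum_le n : \big[Rplus/0]_(0 <= p < n.+1) gf p <= 2.
Proof.
case: n => [|n]; first by rewrite big_nat1 /gf /=; lra.
have := gsum n.+1 isT.
have x0 : 0 < INR n.+1 by apply: INR_gt0.
have : 0 <= ln (INR n.+1) / INR n.+1.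
  apply: Rmult_le_pos; last (apply: Rlt_le; exact: Rinv_0_lt_compat).
  by case: (ln_INR_ge0 n.+1).
have : 0 <= 2 / INR n.+1 by apply: Rmult_le_pos; [lra|apply: Rlt_le; exact: Rinv_0_lt_compat].
lra.
Qed.

Lemma mertens_upper n : (1 <= n)%nat -> Af n <= ln (INR n) + 4 * ln 2.
Proof.
move=> n1.
have x0 : 0 < INR n by apply: INR_gt0.
have h : INR n * Af n - th n <= ln (INR n`!).
  rewrite lnfact_decomp /Af /th big_distrr /= -bigR_sub.
  apply: big_le_nat => p _.
  case pp: (prime p); last by rewrite /logn pp /=; lra.
  have p0 : (0 < p)%nat by exact: prime_gt0.
  have := div_gt_INR n p p0.
  have := leINR _ _ (logn_fact_lower p n pp).
  have := ln_prime_ge0 p pp.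
  have pr : 0 < INR p by exact: INR_gt0.
  move=> l h1 h2.
  have : INR n / INR p - 1 <= INR (n %/ p).
    apply: (Rmult_le_reg_r (INR p)) => //.
    have -> : (INR n / INR p - 1) * INR p = INR n - INR p by field; lra.
    lra.
  move=> h3.
  have -> : INR n * (ln (INR p) / INR p) - ln (INR p) = (INR n / INR p - 1) * ln (INR p) by field; lra.
  apply: Rmult_le_compat_r => //; lra.
have := lnfact_bounds n; have := cheb n.
move=> c [_ u].
have : INR n * Af n <= INR n * (ln (INR n) + 4 * ln 2) by lra.
move/(Rmult_le_reg_l _ _ _ x0); done.
Qed.

Lemma mertens_lower n : (1 <= n)%nat -> ln (INR n) - 3 <= Af n.
Proof.
move=> n1.
have x0 : 0 < INR n by apply: INR_gt0.
have h : ln (INR n`!) <= INR n * (Af n + 2).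
  apply: (Rle_trans _ (INR n * (Af n + \big[Rplus/0]_(0 <= p < n.+1) gf p))); last first.
    have := gsum_le n; nra.
  rewrite lnfact_decomp /Af -big_split big_distrr /=.
  apply: big_le_nat => p _.
  rewrite /gf; case pp: (prime p); last by rewrite /logn pp /=; lra.
  have p1 : 1 < INR p by have := ltINR 1 p (prime_gt1 pp); simpl.
  have := logn_fact_upper p n pp.
  have := ln_prime_ge0 p pp.
  move=> l h1.
  have -> : INR n * (ln (INR p) / INR p + ln (INR p) / (INR p * (INR p - 1)))
     = INR n / (INR p - 1) * ln (INR p) by field; lra.
  apply: Rmult_le_compat_r => //.
have := lnfact_bounds n.
move=> [l _].
have : INR n * (ln (INR n) - 3) <= INR n * Af n by lra.
move/(Rmult_le_reg_l _ _ _ x0); done.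
Qed.

Definition KM := 3 + 4 * ln 2.

Lemma mertens n : (1 <= n)%nat -> Rabs (Af n - ln (INR n)) <= KM.
Proof.
move=> n1; have := mertens_lower n n1; have := mertens_upper n n1.
have := ln2_pos; rewrite /KM => *; apply: Rabs_le; lra.
Qed.

Lemma abel (F G : nat -> R) m d :
  \big[Rplus/0]_(m.+1 <= k < (m + d).+1) (G k * F k) =
  G (m + d)%nat * \big[Rplus/0]_(0 <= p < (m + d).+1) F p
  - G m * \big[Rplus/0]_(0 <= p < m.+1) F p
  - \big[Rplus/0]_(m <= k < m + d) (\big[Rplus/0]_(0 <= p < k.+1) F p * (G k.+1 - G k)).
Proof.
elim: d => [|d IH].
  rewrite addn0 big_geq // [\big[Rplus/0]_(m <= k < m) _]big_geq //; ring.
rewrite addnS big_nat_recrR; last by rewrite ltnS leq_addr.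
rewrite IH.
rewrite [\big[Rplus/0]_(m <= k < (m + d).+1) _]big_nat_recrR ?leq_addr //.
rewrite [\big[Rplus/0]_(0 <= p < (m + d).+2) F p]big_nat_recrR //.
ring.
Qed.

Lemma tele (h : nat -> R) m d :
  \big[Rplus/0]_(m <= k < m + d) (h k.+1 - h k) = h (m + d)%nat - h m.
Proof.
elim: d => [|d IH]; first by rewrite addn0 big_geq //; ring.
rewrite addnS big_nat_recrR ?leq_addr // IH; ring.
Qed.

Definition af p := if prime p then ln (INR p) / INR p else 0.
Definition g k := ln (INR k).

Lemma Af_af n : Af n = \big[Rplus/0]_(0 <= p < n.+1) af p.
Proof. by []. Qed.

Lemma delta_bounds k : (1 <= k)%nat -> 0 <= g k.+1 - g k <= 1.
Proof.
move=> k1; rewrite /g S_INR.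
have x1 : 1 <= INR k by have := leINR 1 k k1; simpl.
have := ln_inc (INR k) ltac:(lra).
have : / INR k <= 1 by rewrite -Rinv_1; apply: Rinv_le_contravar; lra.
lra.
Qed.

Lemma g_mono m n : (1 <= m)%nat -> (m <= n)%nat -> 0 <= g m <= g n.
Proof.
move=> m1 mn; rewrite /g; split.
  rewrite -ln_1; apply: ln_le; first lra; have := leINR 1 m m1; simpl; lra.
apply: ln_le; last exact: leINR.
have := leINR 1 m m1; simpl; lra.
Qed.

Definition T2 n m := \big[Rplus/0]_(m.+1 <= k < n.+1) (g k * af k).

Lemma T2_bound n m : (1 <= m)%nat -> (m <= n)%nat ->
  Rabs (T2 n m - (g n * g n - g m * g m) / 2) <= (3 * KM + 1) * g n.
Proof.
move=> m1 mn.
have [d ->] : exists d, n = (m + d)%nat by exists (n - m)%nat; lia.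
set n' := (m + d)%nat.
have n1 : (1 <= n')%nat by rewrite /n'; lia.
have KM0 : 0 <= KM by rewrite /KM; have := ln2_pos; lra.
set Rk := fun k => Af k - g k.
have RB : forall k, (1 <= k)%nat -> Rabs (Rk k) <= KM by move=> k k1; exact: mertens.
have E : T2 n' m - (g n' * g n' - g m * g m) / 2 =
  g n' * Rk n' - g m * Rk m +
  \big[Rplus/0]_(m <= k < n') ((g k.+1 - g k) * (g k.+1 - g k) / 2 - Rk k * (g k.+1 - g k)).
  have e1 : \big[Rplus/0]_(m <= k < n') ((g k.+1 - g k) * (g k.+1 - g k) / 2 - Rk k * (g k.+1 - g k)) =
     \big[Rplus/0]_(m <= k < n') ((fun k => g k * g k / 2) k.+1 - (fun k => g k * g k / 2) k)
     - \big[Rplus/0]_(m <= k < n') (\big[Rplus/0]_(0 <= p < k.+1) af p * (g k.+1 - g k)).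
    have H : forall a b A : R, (a - b) * (a - b) / 2 - (A - b) * (a - b) = a * a / 2 - b * b / 2 - A * (a - b) by move=> *; field.
    rewrite -bigR_sub; apply: eq_bigr => k _; rewrite /Rk; exact: H.
  rewrite e1 /n' tele /T2 abel -!Af_af /Rk /=; field.
rewrite E.
have SD := tele g m d; rewrite -/n' in SD.
have hs1 : \big[Rplus/0]_(m <= k < n') ((g k.+1 - g k) * (g k.+1 - g k) / 2 - Rk k * (g k.+1 - g k))
   <= \big[Rplus/0]_(m <= k < n') ((KM + 1) * (g k.+1 - g k)).
  apply: big_le_nat => k /andP [mk _].
  have k1 : (1 <= k)%nat by lia.
  have [d1 d2] := delta_bounds k k1.
  have [r1 r2] := proj1 (Rabs_le_between (Rk k) KM) (RB k k1).
  nra.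
have hs2 : \big[Rplus/0]_(m <= k < n') (- KM * (g k.+1 - g k))
   <= \big[Rplus/0]_(m <= k < n') ((g k.+1 - g k) * (g k.+1 - g k) / 2 - Rk k * (g k.+1 - g k)).
  apply: big_le_nat => k /andP [mk _].
  have k1 : (1 <= k)%nat by lia.
  have [d1 d2] := delta_bounds k k1.
  have [r1 r2] := proj1 (Rabs_le_between (Rk k) KM) (RB k k1).
  nra.
rewrite -big_distrr /= SD in hs1.
rewrite -big_distrr /= SD in hs2.
have [gm gn] := g_mono m n' m1 (leq_addr _ _).
have [r1 r2] := proj1 (Rabs_le_between (Rk n') KM) (RB n' n1).
have [r3 r4] := proj1 (Rabs_le_between (Rk m) KM) (RB m m1).
apply: Rabs_le; split; nra.
Qed.

Lemma T1_bound n m : (1 <= m)%nat -> (m <= n)%nat ->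
  Rabs (\big[Rplus/0]_(m.+1 <= k < n.+1) af k - (g n - g m)) <= 2 * KM.
Proof.
move=> m1 mn.
have -> : \big[Rplus/0]_(m.+1 <= k < n.+1) af k = Af n - Af m.
  rewrite !Af_af (@big_cat_natR 0 m.+1 n.+1 af) //; ring.
have := mertens n ltac:(lia); have := mertens m m1; rewrite /g.
move=> h1 h2.
have := proj1 (Rabs_le_between _ _) h1; have := proj1 (Rabs_le_between _ _) h2.
move=> [? ?] [? ?]; apply: Rabs_le; lra.
Qed.

Definition X n m k := \big[Rplus/0]_(m.+1 <= p < n.+1) (if prime p && (p %| k) then ln (INR p) else 0).

Lemma logU_X n m k : (m <= n)%nat -> logUtilde n m k = X n m k.
Proof.
move=> mn; rewrite /logUtilde sum_fold.
have -> : (m.+1 + (n - m))%nat = n.+1 by lia.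
apply: eq_big_nat => p /andP [mp _].
by rewrite primeb_prime dvdb_dvdn //; lia.
Qed.

Lemma big_const_R a b (c : R) : \big[Rplus/0]_(a <= i < b) c = INR (b - a) * c.
Proof.
rewrite big_const_nat; elim: (b - a)%nat => [|d IH] /=; first ring.
rewrite IH; case: d {IH} => [|d] /=; ring.
Qed.

Lemma count_sum n p (c : R) : (0 < p)%nat ->
  \big[Rplus/0]_(1 <= k < n.+1) (if p %| k then c else 0) = c * INR (n %/ p).
Proof.
move=> p0; rewrite divn_count_dvd INR_big big_distrr /=.
apply: eq_bigr => k _; case: (p %| k) => /=; ring.
Qed.

Lemma sum_exch n m (h : nat -> R) :
  \big[Rplus/0]_(1 <= k < n.+1) \big[Rplus/0]_(m.+1 <= p < n.+1)
      (if prime p && (p %| k) then h p else 0)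
  = \big[Rplus/0]_(m.+1 <= p < n.+1) (if prime p then h p * INR (n %/ p) else 0).
Proof.
rewrite exchange_big /=; apply: eq_big_nat => p /andP [mp _].
case pp: (prime p) => /=.
  by rewrite count_sum //; lia.
by rewrite big_const_R; ring.
Qed.

Lemma sq_sum (r : seq nat) (f : nat -> R) : uniq r ->
  (forall i j, i \in r -> j \in r -> i != j -> f i * f j = 0) ->
  \big[Rplus/0]_(i <- r) f i * \big[Rplus/0]_(i <- r) f i = \big[Rplus/0]_(i <- r) (f i * f i).
Proof.
move=> ur H; rewrite big_distrl /=; apply: eq_big_seq => i ir.
rewrite big_distrr /= (bigD1_seq i) //= big1_seq ?Rplus_0_r // => j /andP [ji jr].
by rewrite H // eq_sym.
Qed.

Lemma X_sq n m k : (1 <= k <= n)%nat -> (n < m.+1 * m.+1)%nat ->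
  X n m k * X n m k =
  \big[Rplus/0]_(m.+1 <= p < n.+1) (if prime p && (p %| k) then ln (INR p) * ln (INR p) else 0).
Proof.
move=> /andP [k1 kn] nm; rewrite /X sq_sum ?iota_uniq //.
  by apply: eq_bigr => p _; case: (_ && _) => /=; ring.
move=> i j; rewrite !mem_index_iota => /andP [mi _] /andP [mj _] ij.
case pi: (prime i && (i %| k)); case pj: (prime j && (j %| k)); try ring.
exfalso; move/andP: pi => [pi di]; move/andP: pj => [pj dj].
have cop : coprime i j by rewrite prime_coprime // dvdn_prime2 //.
have : i * j %| k by rewrite Gauss_dvd // di dj.
move/dvdn_leq => /(_ k1).
have : (m.+1 * m.+1 <= i * j)%nat by apply: leq_mul.
lia.
Qed.

Definition S1 n m := \big[Rplus/0]_(m.+1 <= p < n.+1) (if prime p then ln (INR p) * INR (n %/ p) else 0).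
Definition S2 n m := \big[Rplus/0]_(m.+1 <= p < n.+1) (if prime p then ln (INR p) * ln (INR p) * INR (n %/ p) else 0).

Lemma var_formula n m : (1 <= n)%nat -> (m <= n)%nat -> (n < m.+1 * m.+1)%nat ->
  var_logUtilde n m = S2 n m / INR n - (S1 n m / INR n) * (S1 n m / INR n).
Proof.
move=> n1 mn nm.
have x0 : 0 < INR n by apply: INR_gt0.
have eX : forall k, logUtilde n m k = X n m k by move=> k; exact: logU_X.
have sum1 : \big[Rplus/0]_(1 <= k < n.+1) X n m k = S1 n m by rewrite /X sum_exch.
have sum2 : \big[Rplus/0]_(1 <= k < n.+1) (X n m k * X n m k) = S2 n m.
  rewrite /S2; etransitivity; last exact: (sum_exch n m (fun p => ln (INR p) * ln (INR p))).
  by apply: eq_big_nat => k hk; rewrite X_sq.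
have hmean : mean_logUtilde n m = S1 n m / INR n.
  rewrite /mean_logUtilde sum_fold.
  have -> : (1 + n)%nat = n.+1 by lia.
  by rewrite -sum1; congr (_ / _); apply: eq_bigr => k _; rewrite eX.
rewrite /var_logUtilde hmean sum_fold.
have -> : (1 + n)%nat = n.+1 by lia.
set mu := S1 n m / INR n.
have -> : \big[Rplus/0]_(1 <= i < n.+1) ((logUtilde n m i - mu) ^ 2)
   = \big[Rplus/0]_(1 <= i < n.+1) (X n m i * X n m i + (- 2 * mu) * X n m i + mu * mu).
  apply: eq_bigr => k _; rewrite eX /=; ring.
rewrite !big_split /= -big_distrr /= sum1 sum2 big_const_R.
have -> : (n.+1 - 1)%nat = n by lia.
rewrite /mu; field; lra.
Qed.

Lemma th_split n m : (m <= n)%nat ->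
  \big[Rplus/0]_(m.+1 <= p < n.+1) (if prime p then ln (INR p) else 0) <= th n.
Proof.
move=> mn; rewrite /th (@big_cat_natR 0 m.+1 n.+1) //.
have : 0 <= \big[Rplus/0]_(0 <= p < m.+1) (if prime p then ln (INR p) else 0).
  apply: big_ge0_nat => p _; case pp: (prime p); [exact: ln_prime_ge0|lra].
lra.
Qed.

Lemma approx (w : nat -> R) W n m : (1 <= n)%nat -> (m <= n)%nat -> 0 <= W ->
  (forall p, prime p -> (p <= n)%nat -> 0 <= w p <= W) ->
  Rabs (\big[Rplus/0]_(m.+1 <= p < n.+1) (if prime p then w p * ln (INR p) * INR (n %/ p) else 0) / INR n
   - \big[Rplus/0]_(m.+1 <= p < n.+1) (if prime p then w p * ln (INR p) / INR p else 0))
  <= W * (4 * ln 2).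
Proof.
move=> n1 mn W0 Hw.
have x0 : 0 < INR n by apply: INR_gt0.
rewrite /Rdiv [X in Rabs (X - _)]big_distrl /= -bigR_sub.
pose F := fun p => (if prime p then w p * ln (INR p) * INR (n %/ p) else 0) * / INR n - (if prime p then w p * ln (INR p) * / INR p else 0).
change (Rabs (\big[Rplus/0]_(m.+1 <= p < n.+1) F p) <= W * (4 * ln 2)).
have lo : \big[Rplus/0]_(m.+1 <= p < n.+1) (- (W / INR n) * (if prime p then ln (INR p) else 0))
    <= \big[Rplus/0]_(m.+1 <= p < n.+1) F p.
  apply: big_le_nat => p /andP [mp pn].
  rewrite /F; case pp: (prime p); last lra.
  have p0 : (0 < p)%nat by exact: prime_gt0.
  have pr : 0 < INR p by exact: INR_gt0.
  have [w0 wW] := Hw p pp ltac:(lia).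
  have l0 := ln_prime_ge0 p pp.
  have hq := div_gt_INR n p p0.
  set q := INR (n %/ p) in hq *.
  have e : w p * ln (INR p) * q * / INR n - w p * ln (INR p) * / INR p
       = w p * ln (INR p) * ((q * INR p - INR n) / (INR n * INR p)) by field; lra.
  rewrite e.
  have h1 : - 1 / INR n <= (q * INR p - INR n) / (INR n * INR p).
    apply: (Rmult_le_reg_r (INR n * INR p)); first nra.
    have -> : - 1 / INR n * (INR n * INR p) = - INR p by field; lra.
    have -> : (q * INR p - INR n) / (INR n * INR p) * (INR n * INR p) = q * INR p - INR n by field; lra.
    nra.
  have h2 : - (W / INR n) * ln (INR p) <= w p * ln (INR p) * (- 1 / INR n).
    have hw : w p * ln (INR p) <= W * ln (INR p) by apply: Rmult_le_compat_r.
    have ni : 0 < / INR n by apply: Rinv_0_lt_compat.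
    have -> : - (W / INR n) * ln (INR p) = - (W * ln (INR p)) * / INR n by field; lra.
    have -> : w p * ln (INR p) * (- 1 / INR n) = - (w p * ln (INR p)) * / INR n by field; lra.
    apply: Rmult_le_compat_r; lra.
  apply: (Rle_trans _ _ _ h2); apply: Rmult_le_compat_l => //; nra.
have hi : \big[Rplus/0]_(m.+1 <= p < n.+1) F p <= 0.
  apply: (Rle_trans _ (\big[Rplus/0]_(m.+1 <= p < n.+1) (0:R))); last by rewrite big_const_R Rmult_0_r; lra.
  apply: big_le_nat => p /andP [mp pn].
  rewrite /F; case pp: (prime p); last lra.
  have p0 : (0 < p)%nat by exact: prime_gt0.
  have pr : 0 < INR p by exact: INR_gt0.
  have [w0 wW] := Hw p pp ltac:(lia).
  have l0 := ln_prime_ge0 p pp.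
  have hq := div_le_INR n p p0.
  set q := INR (n %/ p) in hq *.
  have e : w p * ln (INR p) * q * / INR n - w p * ln (INR p) * / INR p
       = w p * ln (INR p) * ((q * INR p - INR n) / (INR n * INR p)) by field; lra.
  rewrite e.
  have : (q * INR p - INR n) / (INR n * INR p) <= 0.
    apply: Rmult_le_0_r; first lra.
    apply: Rlt_le; apply: Rinv_0_lt_compat; nra.
  have := Rmult_le_pos _ _ w0 l0; nra.
rewrite -big_distrr /= in lo.
have t := th_split n m mn.
have c := cheb n.
have : W / INR n * \big[Rplus/0]_(m.+1 <= p < n.+1) (if prime p then ln (INR p) else 0) <= W * (4 * ln 2).
  apply: (Rle_trans _ (W / INR n * (4 * ln 2 * INR n))).
    apply: Rmult_le_compat_l; last lra.
    apply: Rmult_le_pos => //; apply: Rlt_le; exact: Rinv_0_lt_compat.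
  right; field; lra.
move=> hW.
apply: Rabs_le; lra.
Qed.

Definition K1 := 2 * KM + 4 * ln 2.
Definition K2 := 3 * KM + 1 + 4 * ln 2.

Lemma main_bound n m : (1 <= m)%nat -> (m <= n)%nat -> (n < m * m)%nat ->
  Rabs (var_logUtilde n m - / 2 * (g n - g m) * (3 * g m - g n))
  <= K2 * g n + 2 * K1 * (g n - g m) + K1 * K1.
Proof.
move=> m1 mn nm.
have n1 : (1 <= n)%nat by lia.
rewrite var_formula //; last by apply: (leq_trans nm); apply: leq_mul.
have x0 : 0 < INR n by apply: INR_gt0.
have [gm gn] := g_mono m n m1 mn.
have A1 := approx (fun _ => 1) 1 n m n1 mn Rle_0_1 (fun p _ _ => conj Rle_0_1 (Rle_refl 1)).
have e1 : \big[Rplus/0]_(m.+1 <= p < n.+1) (if prime p then 1 * ln (INR p) * INR (n %/ p) else 0) = S1 n m.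
  by apply: eq_bigr => p _; case: (prime p) => //; ring.
have e2 : \big[Rplus/0]_(m.+1 <= p < n.+1) (if prime p then 1 * ln (INR p) / INR p else 0)
   = \big[Rplus/0]_(m.+1 <= p < n.+1) af p.
  apply: eq_bigr => p _; rewrite /af; case pp: (prime p) => //; field.
  apply: Rgt_not_eq; apply: INR_gt0; exact: prime_gt0 pp.
rewrite e1 e2 in A1.
have B1 := T1_bound n m m1 mn.
have Hw : forall p, prime p -> (p <= n)%nat -> 0 <= ln (INR p) <= g n.
  move=> p pp pn; split; first exact: ln_prime_ge0.
  apply: ln_le; [apply: INR_gt0; exact: prime_gt0 | exact: leINR].
have gn0 : 0 <= g n by lra.
have A2 := approx (fun p => ln (INR p)) (g n) n m n1 mn gn0 Hw.
have e3 : \big[Rplus/0]_(m.+1 <= p < n.+1) (if prime p then ln (INR p) * ln (INR p) / INR p else 0)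
   = T2 n m.
  by apply: eq_bigr => p _; rewrite /af /g; case: (prime p) => /=; rewrite /Rdiv ?Rmult_0_r; ring.
rewrite e3 -/(S2 n m) in A2.
have B2 := T2_bound n m m1 mn.
set s1 := S1 n m / INR n in A1 *.
set s2 := S2 n m / INR n in A2 *.
set G := g n in A2 B1 B2 gn gn0 Hw *.
set H := g m in B1 B2 gm gn *.
have [a1 a2] := proj1 (Rabs_le_between _ _) A1.
have [b1 b2] := proj1 (Rabs_le_between _ _) B1.
have [c1 c2] := proj1 (Rabs_le_between _ _) A2.
have [d1 d2] := proj1 (Rabs_le_between _ _) B2.
have KM0 : 0 <= KM by rewrite /KM; have := ln2_pos; lra.
have l2 := ln2_pos.
set e := s1 - (G - H).
have ea : - K1 <= e <= K1 by rewrite /e /K1; lra.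
have f1 : (G - H) * e <= (G - H) * K1 by apply: Rmult_le_compat_l; lra.
have f2 : (G - H) * (- K1) <= (G - H) * e by apply: Rmult_le_compat_l; lra.
have f3 : e * e <= K1 * K1 by nra.
have f4 : 0 <= e * e by nra.
have id : s2 - s1 * s1 - / 2 * (G - H) * (3 * H - G)
   = (s2 - (G * G - H * H) / 2) - 2 * (G - H) * e - e * e by rewrite /e; field.
rewrite id.
have c3 : - (K2 - 4 * ln 2 - 4 * ln 2 + 4 * ln 2) * G <= 0 by rewrite /K2; nra.
apply: Rabs_le; rewrite /K2 in c3 *; split; nra.
Qed.

Theorem theorem5p5 (m : nat -> nat)
  (Hsqrt : exists N : nat, forall n : nat, le N n -> sqrt (INR n) < INR (m n))
  (Hsmall : is_lim_seq (fun n => INR (m n) / INR n) 0) :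
  is_lim_seq
    (fun n => var_logUtilde n (m n) /
       (/ 2 * (ln (INR n) - ln (INR (m n))) * (3 * ln (INR (m n)) - ln (INR n))))
    1.
Proof.
apply/is_lim_seq_Reals.
move/is_lim_seq_Reals: Hsmall => Hs.
case: Hsqrt => N1 HN1.
move=> eps eps0.
have KM0 : 0 <= KM by rewrite /KM; have := ln2_pos; lra.
have K10 : 0 <= K1 by rewrite /K1; have := ln2_pos; lra.
have K20 : 0 <= K2 by rewrite /K2; have := ln2_pos; lra.
set C := 4 * K2 + 8 * K1 + 4 * K1 * K1.
have C0 : 0 <= C by rewrite /C; nra.
set M0 := C / eps + 1.
have Ce : 0 <= C / eps by apply: Rmult_le_pos => //; apply: Rlt_le; apply: Rinv_0_lt_compat.
have M01 : 1 <= M0 by rewrite /M0; lra.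
have eM0 : eps * M0 = C + eps by rewrite /M0; field; lra.
have [N2 HN2] := Hs (exp (- M0)) (exp_pos _).
exists (maxn 1 (maxn N1 N2)) => n Hn.
move/leP: Hn; rewrite !geq_max => /and3P [n1 nN1 nN2].
have hsq := HN1 n ltac:(apply/leP; exact nN1).
have hs := HN2 n ltac:(apply/leP; exact nN2).
set mn := m n in hsq hs *.
have x0 : 0 < INR n by apply: INR_gt0.
have sq0 := sqrt_pos (INR n).
have my0 : 0 < INR mn by lra.
have mn1 : (1 <= mn)%nat.
  case E: mn my0 => [|k] //=; lra.
have nmm : INR n < INR mn * INR mn.
  rewrite -(sqrt_sqrt (INR n)); [nra | lra].
have nmm' : (n < mn * mn)%nat.
  have : INR n < INR (mn * mn) by rewrite mult_INR.
  move/INR_lt/ltP; done.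
rewrite /R_dist Rminus_0_r Rabs_pos_eq in hs; last by apply: Rlt_le; apply: Rdiv_lt_0_compat.
have hl : ln (INR mn / INR n) < - M0.
  rewrite -(ln_exp (- M0)); apply: ln_increasing => //; exact: Rdiv_lt_0_compat.
rewrite ln_div // in hl.
have em1 : exp (- M0) < 1 by rewrite -exp_0; apply: exp_increasing; lra.
have mnn : (mn <= n)%nat.
  have : INR mn < INR n.
    have : INR mn / INR n < 1 by lra.
    move=> h; apply: (Rmult_lt_reg_r (/ INR n)); first exact: Rinv_0_lt_compat.
    rewrite Rinv_r; [|lra]; exact h.
  move/INR_lt/ltP => h; exact: ltnW.
have mb := main_bound n mn mn1 mnn nmm'.
rewrite /g in mb.
have [gm gn] := g_mono mn n mn1 mnn; rewrite /g in gm gn.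
set G := ln (INR n) in mb gn hl *.
set H := ln (INR mn) in mb gm gn hl *.
set v := var_logUtilde n mn in mb *.
set L := G - H in mb *.
have LM : M0 < L by rewrite /L; lra.
have H2 : G <= 2 * H.
  rewrite (_ : 2 * H = H + H); last ring.
  rewrite /G /H -ln_mult //; apply: ln_le => //; lra.
set D := / 2 * L * (3 * H - G).
have DL : L * G / 4 <= D by rewrite /D /L; nra.
have LG0 : 0 < L * G by nra.
have D0 : 0 < D by lra.
have key : Rabs (v - D) < eps * D.
  apply: (Rle_lt_trans _ _ _ mb).
  have : 4 * (K2 * G + 2 * K1 * L + K1 * K1) < eps * (L * G).
    have G0 : 0 <= G by lra.
    have h2 : 1 <= G by lra.
    have t : eps * M0 * G <= eps * L * G.
      apply: Rmult_le_compat_r => //; apply: Rmult_le_compat_l; lra.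
    have h1 : (C + eps) * G <= eps * (L * G) by rewrite -eM0; lra.
    have p1 : K1 * L <= K1 * G by apply: Rmult_le_compat_l; rewrite /L; lra.
    have p2 : K1 * K1 * 1 <= K1 * K1 * G.
      apply: Rmult_le_compat_l => //; exact: Rmult_le_pos.
    have p3 : 0 < eps * G by nra.
    rewrite /C in h1; lra.
  nra.
change (Rabs (v / D - 1) < eps).
have -> : v / D - 1 = (v - D) / D by field; lra.
rewrite Rabs_div; last lra.
rewrite (Rabs_pos_eq D); last lra.
apply: (Rmult_lt_reg_r D) => //.
rewrite /Rdiv Rmult_assoc Rinv_l; lra.
Qed.
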